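(* Let $K\subset L$ be a finite separable extension of commutative fields. Let $B$ be a $K$-subspace of $L$ containing $1$. Then the smallest integer $n\geq1$ such that $\langle B^n\rangle$ is a field satisfies $n\leq 2\dim_KL/\dim_KB$.
   Context: For $S\subset L$, $\langle S\rangle$ denotes the $K$-subspace of $L$ spanned by $S$. $B^m=\{b_1\cdots b_m\mid b_i\in B\}$ is the $m$-fold product set. *)

(* Defs.v *)
From HB Require Import structures.
From mathcomp Require Import all_boot all_order all_algebra all_field.
Set Implicit Arguments. Unset Strict Implicit. Unset Printing Implicit Defensive.
Import GRing.Theory Num.Theory.
Local Open Scope ring_scope.

Definition is_field_vs (K : fieldType) (L : fieldExtType K) (V : {vspace L}) : Prop :=
  [/\ (1 : L) \in V,
      (forall x y : L, x \in V -> y \in V -> x * y \in V) &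
      (forall x : L, x \in V -> x^-1 \in V)].

(* Main.v *)
Require Import Defs.
From HB Require Import structures.
From mathcomp Require Import all_boot all_order all_algebra all_field.
From Stdlib Require Import Classical Lia.
Import GRing.Theory Num.Theory.
Local Open Scope ring_scope.
Set Implicit Arguments. Unset Strict Implicit. Unset Printing Implicit Defensive.

Section Orth.
Variables (K : fieldType) (L : fieldExtType K).
Variable tau : {linear L -> K^o}.

Definition gW (W : {vspace L}) (y : L) : 'rV[K^o]_(\dim W) :=
  \row_i tau ((vbasis W)`_i * y).

Fact gW_lin W : linear (gW W).
Proof.
move=> a u v; apply/rowP=> i; rewrite !mxE mulrDr.
by rewrite -scalerAr linearD linearZ.
Qed.

HB.instance Definition _ W := GRing.isLinear.Build K L 'rV[K^o]_(\dim W) *:%R (gW W) (gW_lin W).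

Definition orth (F W : {vspace L}) := (F :&: lker (linfun (gW W)))%VS.

Lemma orthP (F W : {vspace L}) (y : L) :
  reflect (y \in F /\ forall w, w \in W -> tau (w * y) = 0) (y \in orth F W).
Proof.
rewrite /orth memv_cap memv_ker lfunE.
apply: (iffP andP) => [[yF /eqP g0] | [yF H]]; split=> //.
  move=> w /coord_vbasis ->; rewrite mulr_suml linear_sum big1 // => i _.
  rewrite -scalerAl linearZ /=.
  have /rowP/(_ i) : gW W y = 0 := g0.
  by rewrite !mxE => ->; rewrite scaler0.
apply/eqP/rowP=> i; rewrite !mxE; apply: H.
by apply: vbasis_mem; apply: mem_nth; rewrite size_tuple.
Qed.

Lemma dim_orth_ge (F W : {vspace L}) : (\dim F <= \dim (orth F W) + \dim W)%N.
Proof.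
rewrite -(limg_ker_dim (linfun (gW W)) F) leq_add2l.
by rewrite (leq_trans (dimvS (subvf _))) // dimvf /dim /= mul1n.
Qed.
End Orth.

Ltac nprep := repeat match goal with x := _ |- _ => clearbody x end;
 repeat match goal with
 | H : is_true (leq _ _) |- _ => revert H
 | H : is_true (?a != _) |- _ => let t := type of a in unify t nat; revert H
 | H : @eq ?T _ _ |- _ => unify T nat; revert H
 | H : ~ (@eq ?T _ _) |- _ => unify T nat; revert H
 end;
 repeat match goal with |- context [@dimv ?K ?V ?U] => let d := fresh "d" in set d := (@dimv K V U); clearbody d; change nat in d end.
Ltac nlia := repeat match goal with x := _ |- _ => clearbody x end;
 repeat match goal with
 | H : is_true (leq _ _) |- _ => revert H
 | H : is_true (?a != _) |- _ => let t := type of a in unify t nat; revert H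
 | H : @eq ?T _ _ |- _ => unify T nat; revert H
 | H : ~ (@eq ?T _ _) |- _ => unify T nat; revert H
 end;
 repeat match goal with |- context [@dimv ?K ?V ?U] => let d := fresh "d" in set d := (@dimv K V U); clearbody d; change nat in d end;
 rewrite -?plusE -?minusE -?multE;
 intros;
 repeat match goal with
 | H : is_true (leq _ _) |- _ => move/leP: H => H
 | H : is_true (?a != _) |- _ => let t := type of a in unify t nat; move/eqP: H => H
 | H : @eq ?T ?a ?b |- _ => unify T nat; tryif constr_eq T nat then fail else change (@eq nat a b) in H
 | |- is_true (leq _ _) => apply/leP
 | |- is_true (?a != _) => apply/eqP
 end; lia.

Lemma ex_min_prop (P : nat -> Prop) :
  (exists n, P n) -> exists n, P n /\ forall m, P m -> (n <= m)%N.
Proof.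
move=> [n Pn]; apply: NNPP => Hno.
suff S : forall k m, (m <= k)%N -> ~ P m by exact: (S n n (leqnn n) Pn).
elim=> [|k IH] m.
  rewrite leqn0 => /eqP -> P0; apply: Hno; exists 0%N; split=> // j _.
move=> lemk Pm; apply: Hno; exists m; split=> // j Pj.
rewrite leqNgt; apply/negP => ljm; apply: (IH j) => //.
by rewrite -ltnS; exact: leq_trans ljm lemk.
Qed.

Section Frag.
Variables (K : fieldType) (L : fieldExtType K).
Variable tau : {linear L -> K^o}.
Variables (F B : {vspace L}) (N : nat) (e : L).
Hypotheses (F1 : (1:L) \in F) (FM : forall x y, x \in F -> y \in F -> x * y \in F)
  (FV : forall x, x \in F -> x^-1 \in F) (B1 : (1:L) \in B) (FBN : F = (B ^+ N)%VS)
  (BF : (B <= F)%VS) (eF : e \in F) (te : tau e != 0).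

Lemma orthF : orth tau F F = 0%VS.
Proof.
apply/eqP; rewrite -subv0; apply/subvP=> y /orthP[yF H]; rewrite memv0.
apply/negPn/negP=> y0; have := H (e / y) (FM eF (FV yF)).
by rewrite mulrVK ?unitfE // => /eqP; rewrite (negPf te).
Qed.

Lemma dim_orth (W : {vspace L}) : (W <= F)%VS -> (\dim (orth tau F W) + \dim W = \dim F)%N.
Proof.
move=> WF; apply/eqP; rewrite eqn_leq dim_orth_ge andbT.
set W' := (F :\: W)%VS.
have dW : (\dim W + \dim W' = \dim F)%N.
  by rewrite -(dimv_cap_compl F W) (capv_idPr WF).
have cap0 : (orth tau F W :&: orth tau F W' = 0)%VS.
  apply/eqP; rewrite -subv0 -orthF; apply/subvP=> y /memv_capP[/orthP[yF H1] /orthP[_ H2]].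
  apply/orthP; split=> // w; rewrite -{1}(addv_diff_cap F W) (capv_idPr WF).
  case/memv_addP=> [u Hu [v Hv ->]].
  by rewrite mulrDl linearD (H2 u) ?(H1 v) ?addr0.
have := dimv_sum_cap (orth tau F W) (orth tau F W'); rewrite cap0 dimv0 addn0.
have : (\dim (orth tau F W + orth tau F W') <= \dim F)%N.
  by apply: dimvS; rewrite subv_add !capvSl.
have := dim_orth_ge tau F W'.
move=> h1 h2 h3; nlia.
Qed.

Lemma sub_mulB (X : {vspace L}) : (X <= X * B)%VS.
Proof. by rewrite -{1}[X]prodv1 prodvSr // -memvE. Qed.

Lemma mul_subF (X : {vspace L}) : (X <= F)%VS -> (X * B <= F)%VS.
Proof. move=> XF; apply/prodvP=> x b /(subvP XF) xF /(subvP BF) bF; exact: FM. Qed.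

Definition frag (X : {vspace L}) := [&& X != 0%VS, (X <= F)%VS & (X * B)%VS != F].
Definition dlt (X : {vspace L}) := (\dim (X * B) - \dim X)%N.

Lemma dimXB_lt (X : {vspace L}) : (X <= F)%VS -> (X*B)%VS != F -> (\dim (X*B) < \dim F)%N.
Proof.
move=> XF ne; rewrite ltn_neqAle dimvS ?mul_subF // andbT.
apply: contra ne => /eqP d; by rewrite eqEdim mul_subF //= d leqnn.
Qed.

Lemma frag_dual (X : {vspace L}) : frag X -> exists Y,
  [/\ frag Y, (dlt Y <= dlt X)%N & (\dim Y + \dim (X * B) = \dim F)%N].
Proof.
case/and3P=> X0 XF XBF.
have XBsub := mul_subF XF.
exists (orth tau F (X*B)).
have dY := dim_orth XBsub.
have dX := dim_orth XF.
have ltXB := dimXB_lt XF XBF.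
have sYB : (orth tau F (X*B) * B <= orth tau F X)%VS.
  apply/prodvP=> y b /orthP[yF H] bB; apply/orthP; split; first exact: FM yF (subvP BF _ bB).
  move=> x xX; rewrite mulrA mulrAC; apply: H; exact: memv_mul.
have dX0 : (0 < \dim X)%N by rewrite lt0n dimv_eq0.
have dYB := dimvS sYB.
have dYle := dimvS (sub_mulB (orth tau F (X*B))).
have dXle := dimvS (sub_mulB X).
split; last by rewrite dY.
  apply/and3P; split; last first.
  - apply/eqP=> E; move: dYB; rewrite E => dYB; nlia.
  - exact: capvSl.
  - rewrite -dimv_eq0 -lt0n; nlia.
rewrite /dlt; nlia.
Qed.

Lemma frag_trans (X : {vspace L}) x : frag X -> x \in F -> x != 0 ->
  [/\ frag (X * <[x]>), dlt (X * <[x]>) = dlt X & \dim (X * <[x]>) = \dim X].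
Proof.
case/and3P=> X0 XF XBF xF x0.
have eXB : ((X * <[x]>) * B = (X * B) * <[x]>)%VS by rewrite -!prodvA [(<[x]> * B)%VS]prodvC.
have dX := dim_cosetv X x0.
have dXB := dim_cosetv (X*B) x0.
have sub : (X * <[x]> <= F)%VS.
  apply/prodvP => u v /(subvP XF) uF /vlineP[k ->]; rewrite -scalerAr memvZ //; exact: FM.
split => //; last by rewrite /dlt eXB dX dXB.
apply/and3P; split => //; first by rewrite -dimv_eq0 dX dimv_eq0.
rewrite eXB; apply: contra XBF => /eqP E.
by rewrite eqEdim mul_subF //= -dXB E.
Qed.

Hypothesis BnF : B != F.

Lemma frag1 : frag 1%VS.
Proof.
apply/and3P; split.
- by rewrite -dimv_eq0 dim_vline oner_neq0.
- by rewrite -memvE.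
- by rewrite prod1v.
Qed.

Lemma growth (X : {vspace L}) : frag X -> (\dim B <= 2 * dlt X)%N.
Proof.
move=> fX.
have [k [[X1 [fX1 dX1]] kmin]] := ex_min_prop
  (ex_intro (fun k => exists X, frag X /\ dlt X = k) _ (ex_intro _ X (conj fX erefl))).
have [a [[A [fA dA aA]] amin]] := ex_min_prop
  (ex_intro (fun a => exists X, [/\ frag X, dlt X = k & \dim X = a]) _
     (ex_intro _ X1 (And3 fX1 dX1 erefl))).
have kmin' : forall Y, frag Y -> (k <= dlt Y)%N.
  by move=> Y fY; apply: kmin; exists Y.
have amin' : forall Y, frag Y -> dlt Y = k -> (a <= \dim Y)%N.
  by move=> Y fY dY; apply: amin; exists Y.
have uniqA : forall A1 A2, [/\ frag A1, dlt A1 = k & \dim A1 = a] ->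
    [/\ frag A2, dlt A2 = k & \dim A2 = a] -> (A1 :&: A2)%VS != 0%VS -> A1 = A2.
  move=> A1 A2 [f1 d1 a1] [f2 d2 a2] I0.
  case/and3P: (f1) => A10 A1F A1B; case/and3P: (f2) => A20 A2F A2B.
  apply: NNPP => ne.
  have IA1 : (A1 :&: A2 <= A1)%VS := capvSl _ _.
  have dIlt : (\dim (A1 :&: A2) < a)%N.
    rewrite ltn_neqAle -a1 dimvS // andbT; apply/eqP => dI.
    have e1 : (A1 :&: A2)%VS = A1 by apply/eqP; rewrite eqEdim IA1 dI leqnn.
    have A12 : (A1 <= A2)%VS by rewrite -e1 capvSr.
    by apply: ne; apply/eqP; rewrite eqEdim A12 a1 a2 leqnn.
  have IF : (A1 :&: A2 <= F)%VS := subv_trans IA1 A1F.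
  have IB1 : ((A1 :&: A2) * B <= A1 * B)%VS := prodvSl B IA1.
  have IB2 : ((A1 :&: A2) * B <= A2 * B)%VS := prodvSl B (capvSr A1 A2).
  have fI : frag (A1 :&: A2).
    apply/and3P; split=> //; apply/eqP => E; move/eqP: A1B; apply.
    by apply/eqP; rewrite eqEdim mul_subF //= -E dimvS.
  have dIk := kmin' _ fI.
  have dIne : dlt (A1 :&: A2) != k.
    by apply/eqP=> h; have := amin' _ fI h; rewrite leqNgt dIlt.
  have key : (\dim ((A1 + A2) * B) + \dim ((A1 :&: A2) * B) <= \dim (A1 * B) + \dim (A2 * B))%N.
    have h1 := dimv_sum_cap (A1 * B) (A2 * B).
    have h2 : (\dim ((A1:&:A2)*B) <= \dim (A1*B :&: A2*B))%N.
      by apply: dimvS; rewrite subv_cap IB1 IB2.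
    rewrite prodvDl; nlia.
  have dsum := dimv_sum_cap A1 A2.
  have dI0 : (0 < \dim (A1 :&: A2))%N by rewrite lt0n dimv_eq0.
  have l1 := dimvS (sub_mulB A1).
  have l2 := dimvS (sub_mulB A2).
  have lI := dimvS (sub_mulB (A1 :&: A2)).
  have lS := dimvS (sub_mulB (A1 + A2)).
  move: d1 d2 dIk dIne; rewrite /dlt => d1 d2 dIk dIne.
  case: (eqVneq ((A1 + A2) * B)%VS F) => [E | NE].
    have [Y [fY dY dimY]] := frag_dual f1.
    have kY := kmin' _ fY.
    have eY : dlt Y = k by apply/eqP; rewrite eqn_leq kY andbT -d1; exact: dY.
    have aY := amin' _ fY eY.
    move: key; rewrite E => key; nlia.
  have fS : frag (A1 + A2).
    apply/and3P; split => //; last by rewrite subv_add A1F A2F.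
    apply: contra A10; rewrite -!subv0 => h; exact: subv_trans (addvSl _ _) h.
  have kS := kmin' _ fS.
  move: kS; rewrite /dlt => kS; nlia.
case/and3P: (fA) => A0 AF AB.
have x0 : vpick A != 0 by rewrite vpick0.
have xF : vpick A \in F := subvP AF _ (memv_pick A).
have [fH dH aH] := frag_trans fA (FV xF) (invr_neq0 x0).
set H := (A * <[(vpick A)^-1]>)%VS in fH dH aH.
have atH : [/\ frag H, dlt H = k & \dim H = a] by split; rewrite ?dH ?aH ?dA ?aA.
have H1 : (1:L) \in H by rewrite -(divff x0) memv_mul ?memv_pick ?memv_line.
case/and3P: (fH) => H0 HF HB.
have Hcl : forall y, y \in H -> y != 0 -> (H * <[y^-1]>)%VS = H.
  move=> y yH y0; have yF := subvP HF _ yH.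
  have [fHy dHy aHy] := frag_trans fH (FV yF) (invr_neq0 y0).
  apply: uniqA; first by split; rewrite ?dHy ?aHy ?dH ?aH ?dA ?aA.
    exact: atH.
  apply/negP => /eqP E.
  have : (1:L) \in (H * <[y^-1]> :&: H)%VS.
    by rewrite memv_cap H1 -(divff y0) memv_mul ?memv_line.
  by rewrite E memv0 oner_eq0.
have Hinv : forall y, y \in H -> y^-1 \in H.
  move=> y yH; have [->|y0] := eqVneq y 0; first by rewrite invr0 mem0v.
  by have := memv_mul H1 (memv_line y^-1); rewrite mul1r Hcl.
have Hmul : forall y z, y \in H -> z \in H -> z * y \in H.
  move=> y z yH zH; have [->|y0] := eqVneq y 0; first by rewrite mulr0 mem0v.
  have yi0 : y^-1 != 0 by rewrite invr_neq0.
  by have := memv_mul zH (memv_line y^-1^-1); rewrite (Hcl (y^-1)) ?Hinv // invrK.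
have nBH : ~~ (B <= H)%VS.
  apply/negP => BH.
  have powH : forall j, (B ^+ j <= H)%VS.
    elim=> [|j IH]; first by rewrite expv0 -memvE.
    rewrite expvSl; apply/prodvP => u v uB vH.
    by apply: Hmul; [exact: subvP IH _ vH | exact: subvP BH _ uB].
  have FH : (F <= H)%VS by rewrite FBN powH.
  move/eqP: HB; apply; apply/eqP; rewrite eqEdim mul_subF //=.
  exact: dimvS (subv_trans FH (sub_mulB H)).
case/subvPn: nBH => b bB bH.
have b0 : b != 0 by apply: contraNneq bH => ->; rewrite mem0v.
have sHB : (H + H * <[b]> <= H * B)%VS.
  by rewrite subv_add sub_mulB prodvSr // -memvE.
have cap0 : (H :&: H * <[b]> = 0)%VS.
  apply/eqP; rewrite -subv0; apply/subvP => z /memv_capP[zH /memv_cosetP[h hH zE]].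
  rewrite memv0 zE; have [->|h0] := eqVneq h 0; first by rewrite mul0r.
  case/negP: bH; rewrite -(mulKf h0 b); apply: Hmul; first by rewrite -zE.
  exact: Hinv.
have dHb := dim_cosetv H b0.
have := dimv_sum_cap H (H * <[b]>); rewrite cap0 dimv0 addn0 => ds.
have := dimvS sHB.
have BHB : (B <= H * B)%VS by rewrite -{1}[B]prod1v prodvSl // -memvE.
have := dimvS BHB.
have kX := kmin' _ fX.
have lH := dimvS (sub_mulB H).
move: dH; rewrite dA /dlt => dH'.
move: kX; rewrite /dlt => kX.
have lX := dimvS (sub_mulB X).
rewrite /dlt; move=> h1 h2; nlia.
Qed.

End Frag.

Section Pow.
Variables (K : fieldType) (L : fieldExtType K) (B : {vspace L}).
Hypothesis B1 : (1:L) \in B.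

Lemma pow_mono j : (B ^+ j <= B ^+ j.+1)%VS.
Proof. by rewrite expvSr -{1}[(B ^+ j)%VS]prodv1 prodvSr // -memvE. Qed.

Lemma pow_monoS i j : (i <= j)%N -> (B ^+ i <= B ^+ j)%VS.
Proof.
elim: j => [|j IH]; first by rewrite leqn0 => /eqP ->.
rewrite leq_eqVlt => /orP[/eqP -> //|]; rewrite ltnS => /IH h.
exact: subv_trans h (pow_mono j).
Qed.

Lemma one_pow j : (1:L) \in (B ^+ j)%VS.
Proof. by rewrite memvE (pow_monoS (leq0n j)). Qed.

Lemma ex_stable : exists j, (B ^+ j)%VS = (B ^+ j.+1)%VS.
Proof.
apply: NNPP => H.
have grow : forall j, (j <= \dim (B ^+ j))%N.
  elim=> [|j IH] //.
  have ne : (B ^+ j)%VS != (B ^+ j.+1)%VS by apply/eqP => E; apply: H; exists j.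
  have := dimv_leqif_eq (pow_mono j); rewrite (negPf ne) => -[le _].
  apply: leq_ltn_trans IH _; rewrite ltn_neqAle le andbT.
  by apply: contra ne => /eqP d; rewrite eqEdim pow_mono -d leqnn.
have := grow (\dim {:L}).+1.
by rewrite leqNgt ltnS dimvS // subvf.
Qed.

Lemma stable_field j : (B ^+ j)%VS = (B ^+ j.+1)%VS -> is_field_vs (B ^+ j.+1)%VS.
Proof.
move=> E.
have st : forall m, (B ^+ (j + m))%VS = (B ^+ j)%VS.
  elim=> [|m IH]; first by rewrite addn0.
  by rewrite addnS expvSr IH -expvSr E.
set V := (B ^+ j.+1)%VS.
have VV : (V * V = V)%VS.
  rewrite /V -expvD (_ : (j.+1 + j.+1 = j + j.+2)%N); last by rewrite addSn !addnS.
  by rewrite st.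
have Vmul : forall x y, x \in V -> y \in V -> x * y \in V.
  by move=> x y xV yV; rewrite -VV memv_mul.
split; first exact: one_pow.
  exact: Vmul.
move=> x xV; have [->|x0] := eqVneq x 0; first by rewrite invr0 mem0v.
have sub : (V * <[x]> <= V)%VS by rewrite -{2}VV prodvSr // -memvE.
have eqV : (V * <[x]>)%VS = V.
  by apply/eqP; rewrite eqEdim sub dim_cosetv // leqnn.
have := one_pow j.+1; rewrite -/V -eqV => /memv_cosetP[u uV ux].
have -> : x^-1 = u by rewrite -[LHS]mul1r ux mulfK.
by rewrite eqV.
Qed.
End Pow.

Lemma bound_nat (K : fieldType) (L : fieldExtType K) (B : {vspace L})
  (h1 : (1 : L) \in B) (n : nat) (n1 : (1 <= n)%N) (fn : is_field_vs (B ^+ n)%VS)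
  (nmin : forall m, (1 <= m)%N -> (m < n)%N -> ~ is_field_vs (B ^+ m)%VS) :
  (n * \dim B <= 2 * \dim {:L})%N.
Proof.
have dBL : (\dim B <= \dim {:L})%N by apply: dimvS; exact: subvf.
case: (ltngtP n 1) => [|n2|->]; first by rewrite ltnNge n1.
  2: by rewrite mul1n (leq_trans dBL) // leq_pmull.
case: fn => F1 FM FV.
set F := (B ^+ n)%VS in F1 FM FV *.
have dF0 : (0 < \dim F)%N.
  by rewrite lt0n dimv_eq0; apply/eqP => E; move: F1; rewrite E memv0 oner_eq0.
pose i0 := Ordinal dF0.
pose tau : {linear L -> K^o} := coord (vbasis F) i0.
pose e := (vbasis F)`_i0.
have eF : e \in F by apply: vbasis_mem; apply: mem_nth; rewrite size_tuple.
have te : tau e != 0.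
  change (coord (vbasis F) i0 e != 0).
  by rewrite /e coord_free ?eqxx ?oner_eq0 //; exact: basis_free (vbasisP F).
have BF : (B <= F)%VS by rewrite /F -{1}[B]expv1 pow_monoS // ltnW.
have BnF : B != F.
  apply/eqP => E; apply: (nmin 1%N) => //; rewrite expv1 E; exact: (And3 F1 FM FV).
have notF : forall j, (1 <= j)%N -> (j < n)%N -> (B ^+ j)%VS != F.
  move=> j j1 jn; apply/eqP => E; apply: (nmin j) => //; rewrite E; exact: (And3 F1 FM FV).
have claim : forall j, (1 <= j)%N -> (j < n)%N -> (j.+1 * \dim B <= 2 * \dim (B ^+ j))%N.
  elim=> [//|j IH] _ jn.
  case: (posnP j) => [->|j0]; first by rewrite expv1 mulnC.
  have := IH j0 (ltnW jn).
  have fX : frag F B (B ^+ j)%VS.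
    apply/and3P; split.
    - by apply: contraTneq (one_pow h1 j) => ->; rewrite memv0 oner_eq0.
    - by rewrite /F pow_monoS // ltnW // ltnW.
    - by rewrite -expvSr notF.
  have := @growth K L tau F B n e FM FV h1 (erefl _) BF eF te _ fX.
  have := dimvS (sub_mulB h1 (B ^+ j)%VS).
  rewrite /dlt -expvSr => h2 h3 h4.
  rewrite mulSn; nlia.
have hn1 : (1 <= n.-1)%N by rewrite -ltnS prednK // ltnW.
have hn2 : (n.-1 < n)%N by rewrite prednK // ltnW.
have h := claim _ hn1 hn2; rewrite prednK // in h.
have s : (B ^+ n.-1 <= F)%VS by rewrite /F pow_monoS // leq_pred.
have lt : (\dim (B ^+ n.-1) < \dim F)%N.
  rewrite ltn_neqAle dimvS // andbT; apply: contra (notF _ hn1 hn2) => /eqP d.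
  by rewrite eqEdim s -d leqnn.
have := dimvS (subvf F).
move=> hF; nlia.
Qed.

Unset Implicit Arguments.
Theorem mainTheorem15 (K : fieldType) (L : fieldExtType K)
  (B : {vspace L})
  (hsep : separable 1%VS {:L}%VS)
  (h1 : (1 : L) \in B) :
  exists n : nat,
    [/\ (1 <= n)%N,
        is_field_vs (B ^+ n)%VS,
        (forall m : nat, (1 <= m)%N -> (m < n)%N -> ~ is_field_vs (B ^+ m)%VS) &
        (n%:R : rat) <= 2 * (\dim {:L})%:R / (\dim B)%:R].
Proof.
have [j Ej] := ex_stable h1.
have [n [[n1 fn] nmin]] := ex_min_prop
  (ex_intro (fun m => (1 <= m)%N /\ is_field_vs (B ^+ m)%VS) j.+1
     (conj (ltn0Sn j) (stable_field h1 Ej))).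
have nmin' : forall m : nat, (1 <= m)%N -> (m < n)%N -> ~ is_field_vs (B ^+ m)%VS.
  by move=> m m1 mn fm; have := nmin m (conj m1 fm); rewrite leqNgt mn.
exists n; split => //.
have hb := bound_nat h1 n1 fn nmin'.
have k0 : (0 < \dim B)%N.
  by rewrite lt0n dimv_eq0; apply/eqP => E; move: h1; rewrite E memv0 oner_eq0.
rewrite ler_pdivlMr ?ltr0n // -natrM -natrM ler_nat.
exact: hb.
Qed.
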